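(* Let $G$ be the graph with vertex set $\mathbb{Z}_{16}$ in which $i$ and $j$ are adjacent iff $i-j\in\{\pm1,\pm2,\pm4\}\pmod{16}$, and let $H$ be the graph with vertex set $\mathbb{Z}_{16}$ in which $i$ and $j$ are adjacent iff $i-j\in\{\pm1,\pm3,\pm4\}\pmod{16}$. Then $G$ and $H$ are distinguishable by EB-1WL but not distinguishable by NC-1WL.
   Context: All graphs are finite, simple and undirected; $N(v)$ denotes the neighborhood of $v$. An ordered edge of $G=(V,E)$ is a pair $(u,v)$ with $\{u,v\}\in E$. EB-1WL coloring: $\mathrm{eb}^{(0)}(G,(u,v))=1$ for every ordered edge, and $\mathrm{eb}^{(\ell+1)}(G,(u,v)) = \big(\mathrm{eb}^{(\ell)}(G,(u,v)),\ \{\!\{\mathrm{eb}^{(\ell)}(G,(u,x)) : x\in N(u)\}\!\},\ \{\!\{(\mathrm{eb}^{(\ell)}(G,(u,y)),\mathrm{eb}^{(\ell)}(G,(v,y))) : y\in N(u)\cap N(v)\}\!\},\ \{\!\{\mathrm{eb}^{(\ell)}(G,(v,z)) : z\in N(v)\}\!\}\big)$. $\mathrm{eb}^{(\ell)}(G)$ is the multiset of $\mathrm{eb}^{(\ell)}(G,(u,v))$ over all ordered edges. Graphs are distinguishable by EB-1WL if they have different numbers of vertices or there is $\ell$ with $\mathrm{eb}^{(\ell)}(G)\neq\mathrm{eb}^{(\ell)}(H)$. NC-1WL coloring of vertices: $\mathrm{nc}^{(0)}(G,v)=1$ and $\mathrm{nc}^{(\ell+1)}(G,v)=\big(\mathrm{nc}^{(\ell)}(G,v),\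 \{\!\{\mathrm{nc}^{(\ell)}(G,u): u\in N(v)\}\!\},\ \{\!\{(\mathrm{nc}^{(\ell)}(G,u),\mathrm{nc}^{(\ell)}(G,w)) : u,w\in N(v),\ \{u,w\}\in E\}\!\}\big)$. $\mathrm{nc}^{(\ell)}(G)=\{\!\{\mathrm{nc}^{(\ell)}(G,v): v\in V\}\!\}$; graphs are distinguishable by NC-1WL if there is $\ell$ with $\mathrm{nc}^{(\ell)}(G)\neq\mathrm{nc}^{(\ell)}(H)$. Colors are nested tuples/multisets, comparable across graphs. *)

(* Defs.v *)
From HB Require Import structures.
From mathcomp Require Import all_boot all_order.
From mathcomp Require Import finmap multiset.

Set Implicit Arguments.
Unset Strict Implicit.
Unset Printing Implicit Defensive.
Local Open Scope mset_scope.
Local Open Scope nat_scope.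

Definition simple_graph (V : finType) (adj : rel V) :=
  symmetric adj /\ irreflexive adj.

Definition nbrs (V : finType) (adj : rel V) (v : V) : seq V :=
  [seq x <- enum V | adj v x].

(* Colours of round l live in the
   choiceType ebCol l (resp. ncCol l); multisets are finmap's {mset _},
   so equality of colours is Leibniz equality and is comparable across graphs. *)
Fixpoint ebCol (l : nat) : choiceType :=
  match l with
  | 0 => unit
  | l'.+1 => (ebCol l' * {mset ebCol l'} * {mset (ebCol l' * ebCol l')%type}
              * {mset ebCol l'})%type
  end.

(* EB-1WL colour of the ordered pair (u,v) (only used on ordered edges). *)
Fixpoint eb (V : finType) (adj : rel V) (l : nat) (u v : V) : ebCol l :=
  match l return ebCol l with
  | 0 => tt
  | l'.+1 =>
    (eb adj l' u v,
     seq_mset [seq eb adj l' u x | x <- nbrs adj u],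
     seq_mset [seq (eb adj l' u y, eb adj l' v y)
                 | y <- nbrs adj u & adj v y],
     seq_mset [seq eb adj l' v z | z <- nbrs adj v])
  end.

Definition ordered_edges (V : finType) (adj : rel V) : seq (V * V) :=
  [seq e <- [seq (u, v) | u <- enum V, v <- enum V] | adj e.1 e.2].

Definition ebGraph (V : finType) (adj : rel V) (l : nat) : {mset ebCol l} :=
  seq_mset [seq eb adj l e.1 e.2 | e <- ordered_edges adj].

Definition EB_distinguishable (V W : finType) (adjG : rel V) (adjH : rel W) :=
  #|V| <> #|W| \/ exists l, ebGraph adjG l <> ebGraph adjH l.

Fixpoint ncCol (l : nat) : choiceType :=
  match l with
  | 0 => unit
  | l'.+1 => (ncCol l' * {mset ncCol l'} * {mset (ncCol l' * ncCol l')%type})%type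
  end.

Fixpoint nc (V : finType) (adj : rel V) (l : nat) (v : V) : ncCol l :=
  match l return ncCol l with
  | 0 => tt
  | l'.+1 =>
    (nc adj l' v,
     seq_mset [seq nc adj l' u | u <- nbrs adj v],
     seq_mset [seq (nc adj l' p.1, nc adj l' p.2)
                 | p <- [seq p <- [seq (u, w) | u <- nbrs adj v, w <- nbrs adj v]
                         | adj p.1 p.2]])
  end.

Definition ncGraph (V : finType) (adj : rel V) (l : nat) : {mset ncCol l} :=
  seq_mset [seq nc adj l v | v <- enum V].

Definition NC_distinguishable (V W : finType) (adjG : rel V) (adjH : rel W) :=
  exists l, ncGraph adjG l <> ncGraph adjH l.

Definition diff16 (i j : 'I_16) : nat := (i + 16 - j) %% 16.

Definition adjG16 : rel 'I_16 := fun i j => diff16 i j \in [:: 1; 15; 2; 14; 4; 12].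
Definition adjH16 : rel 'I_16 := fun i j => diff16 i j \in [:: 1; 15; 3; 13; 4; 12].

(* Main.v *)
Require Import Defs.
From mathcomp Require Import all_boot all_order.
From mathcomp Require Import finmap multiset.
Local Open Scope mset_scope.

Lemma size_seq_mset (K : choiceType) (s : seq K) : size (seq_mset s) = size s.
Proof. exact: perm_size (perm_eq_seq_mset s). Qed.

Definition L16 : seq 'I_16 :=
  [:: @Ordinal 16 0 isT; @Ordinal 16 1 isT; @Ordinal 16 2 isT; @Ordinal 16 3 isT;
      @Ordinal 16 4 isT; @Ordinal 16 5 isT; @Ordinal 16 6 isT; @Ordinal 16 7 isT;
      @Ordinal 16 8 isT; @Ordinal 16 9 isT; @Ordinal 16 10 isT; @Ordinal 16 11 isT;
      @Ordinal 16 12 isT; @Ordinal 16 13 isT; @Ordinal 16 14 isT; @Ordinal 16 15 isT].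

Lemma e16 : enum 'I_16 = L16.
Proof. by apply: (inj_map val_inj); rewrite val_enum_ord. Qed.

Lemma inL16 (i : 'I_16) : i \in L16.
Proof. by rewrite -e16 mem_enum. Qed.

Lemma simpleG : simple_graph adjG16.
Proof.
split.
  have H : all (fun i => all (fun j => adjG16 i j == adjG16 j i) L16) L16 by vm_compute.
  move=> i j; apply/eqP; move/allP: H => /(_ i (inL16 i)) /allP /(_ j (inL16 j)) //.
have H : all (fun i => ~~ adjG16 i i) L16 by vm_compute.
by move=> i; apply/negbTE; move/allP: H => /(_ i (inL16 i)).
Qed.

Lemma simpleH : simple_graph adjH16.
Proof.
split.
  have H : all (fun i => all (fun j => adjH16 i j == adjH16 j i) L16) L16 by vm_compute.
  move=> i j; apply/eqP; move/allP: H => /(_ i (inL16 i)) /allP /(_ j (inL16 j)) //.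
have H : all (fun i => ~~ adjH16 i i) L16 by vm_compute.
by move=> i; apply/negbTE; move/allP: H => /(_ i (inL16 i)).
Qed.

Definition tri3 (adj : rel 'I_16) (e : 'I_16 * 'I_16) : bool :=
  size [seq y <- nbrs adj e.1 | adj e.2 y] == 3.

Definition f3 (c : ebCol 1) : bool :=
  size (c.1.2 : {mset (unit * unit)%type}) == 3.

Lemma eb_tri (adj : rel 'I_16) (e : 'I_16 * 'I_16) :
  f3 (eb adj 1 e.1 e.2) = tri3 adj e.
Proof. by rewrite /f3 /tri3 /= (perm_size (perm_eq_seq_mset _)) size_map. Qed.

Lemma EBdist : EB_distinguishable adjG16 adjH16.
Proof.
right; exists 1; rewrite /ebGraph => /eq_seq_msetP P.
have := permP P f3.
rewrite !count_map (eq_count (eb_tri adjG16)) (eq_count (eb_tri adjH16)).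
rewrite /tri3 /nbrs /ordered_edges e16.
by vm_compute.
Qed.

Definition tripairs (adj : rel 'I_16) (v : 'I_16) :=
  [seq p <- [seq (u, w) | u <- nbrs adj v, w <- nbrs adj v] | adj p.1 p.2].

Lemma sizes (adj : rel 'I_16) :
  all (fun v => (size (nbrs adj v) == 6) && (size (tripairs adj v) == 12)) L16 ->
  forall v, size (nbrs adj v) = 6 /\ size (tripairs adj v) = 12.
Proof.
move=> /allP H v; have /andP[/eqP -> /eqP ->] := H v (inL16 v); by [].
Qed.

Lemma sG v : size (nbrs adjG16 v) = 6 /\ size (tripairs adjG16 v) = 12.
Proof. apply: sizes; rewrite /tripairs /nbrs e16; by vm_compute. Qed.

Lemma sH v : size (nbrs adjH16 v) = 6 /\ size (tripairs adjH16 v) = 12.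
Proof. apply: sizes; rewrite /tripairs /nbrs e16; by vm_compute. Qed.

Lemma map_const_eq (A B : Type) (f : A -> B) c s :
  (forall x, f x = c) -> map f s = nseq (size s) c.
Proof. by move=> H; elim: s => //= x s ->; rewrite H. Qed.
Arguments map_const_eq {A B f} c {s}.

Lemma nc_const l : exists c, forall v, nc adjG16 l v = c /\ nc adjH16 l v = c.
Proof.
elim: l => [|l [c IH]]; first by exists tt.
exists (c, seq_mset (nseq 6 c), seq_mset (nseq 12 (c, c))) => v.
have E1 : forall adj : rel 'I_16, (forall x, nc adj l x = c) ->
  size (nbrs adj v) = 6 /\ size (tripairs adj v) = 12 ->
  nc adj l.+1 v = (c, seq_mset (nseq 6 c), seq_mset (nseq 12 (c, c))).
  move=> adj Hc [S1 S2] /=.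
  rewrite Hc (map_const_eq c Hc) S1.
  rewrite (map_const_eq (c, c)); last by move=> x; rewrite !Hc.
  by rewrite -/(tripairs adj v) S2.
split; apply: E1; try exact: sG; try exact: sH; move=> x; by case: (IH x).
Qed.

Theorem mainTheorem4 :
  simple_graph adjG16 /\ simple_graph adjH16 /\
  EB_distinguishable adjG16 adjH16 /\ ~ NC_distinguishable adjG16 adjH16.
Proof.
split; first exact: simpleG.
split; first exact: simpleH.
split; first exact: EBdist.
case=> l; apply; rewrite /ncGraph.
have [c Hc] := nc_const l.
rewrite (map_const_eq c); last by move=> x; case: (Hc x).
by rewrite (map_const_eq c); last by move=> x; case: (Hc x).
Qed.
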